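(* Let $0\le k,l\le N$ be integers, let $q$ be a nonzero complex number with $q^j\ne1$ for $1\le j\le N$, and let $t\neq0$. Then $$\binom{N}{l}_q\,t^{k}\;{}_3\phi_2\!\left[\begin{matrix}q^{-k},q^{-l},1/t\\ q^{-N},0\end{matrix};q,q\right]=\sum_{P}q^{\|P\|}\,t^{y_k(P)},$$ where the sum is over all lattice paths $P$ from $(0,0)$ to $(l,N-l)$ with unit right and up steps, $\|P\|$ is the sum, over all up steps of $P$, of the $x$-coordinate of the starting point of that step (the number of boxes to the upper left of the path), and $y_k(P)$ is the number of up steps among the first $k$ steps of $P$.
   Context: $(a;q)_k=\prod_{j=0}^{k-1}(1-aq^j)$, $\binom{N}{l}_q=\frac{(q;q)_N}{(q;q)_l(q;q)_{N-l}}$, and ${}_3\phi_2\!\left[\begin{matrix}a_1,a_2,a_3\\ b_1,b_2\end{matrix};q,z\right]=\sum_{j\ge0}\frac{(a_1,a_2,a_3;q)_j}{(q,b_1,b_2;q)_j}z^j$ (terminating; $(0;q)_j=1$). *)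

(* Defs.v *)
From HB Require Import structures.
From mathcomp Require Import all_boot all_order all_algebra.
From mathcomp Require Import complex.
From mathcomp Require Import reals.
Set Implicit Arguments. Unset Strict Implicit. Unset Printing Implicit Defensive.
Import Order.TTheory GRing.Theory Num.Theory.
Local Open Scope ring_scope.

Definition qpoch (F : fieldType) (a q : F) (k : nat) : F :=
  \prod_(j < k) (1 - a * q ^+ j).

Definition qbinom (F : fieldType) (q : F) (N l : nat) : F :=
  qpoch q q N / (qpoch q q l * qpoch q q (N - l)%N).

Definition phi32 (F : fieldType) (M : nat) (a1 a2 a3 b1 b2 q z : F) : F :=
  \sum_(j < M.+1) (qpoch a1 q j * qpoch a2 q j * qpoch a3 q j)
                   / (qpoch q q j * qpoch b1 q j * qpoch b2 q j) * z ^+ j.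

(* Lattice paths from (0,0) with N unit steps, encoded as N.-tuple bool:
   true = right step, false = up step.  Paths ending at (l, N-l) are those
   with exactly l right steps. *)
Definition path_end_ok (N l : nat) (P : N.-tuple bool) : bool :=
  count id P == l.

Definition path_area (N : nat) (P : N.-tuple bool) : nat :=
  \sum_(i < N | ~~ tnth P i) count id (take i P).

Definition path_yk (N : nat) (k : nat) (P : N.-tuple bool) : nat :=
  count negb (take k P).

(* Main.v *)
From HB Require Import structures.
Require Import Defs.
From mathcomp Require Import all_boot all_order all_algebra zify ring.
From mathcomp Require Import complex.
From mathcomp Require Import reals.
Import Order.TTheory GRing.Theory Num.Theory.
Local Open Scope ring_scope.

Section Alg.
Variable F : fieldType.
Variables (q t : F) (Nm : nat).
Hypothesis hq0 : q != 0.
Hypothesis hq : forall j : nat, (1 <= j <= Nm)%N -> q ^+ j != 1.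

Definition fp (m j : nat) : F := \prod_(i < j) (1 - q ^+ (m - i)).
Definition qf n := fp n n.
Definition B n m := fp n m / qf m.

Lemma fp_recr m j : fp m j.+1 = fp m j * (1 - q ^+ (m - j)).
Proof. by rewrite /fp big_ord_recr. Qed.

Lemma fp_recl m j : fp m.+1 j.+1 = (1 - q ^+ m.+1) * fp m j.
Proof. by rewrite /fp big_ord_recl subn0. Qed.

Lemma fp0 m : fp m 0 = 1.
Proof. by rewrite /fp big_ord0. Qed.

Lemma fp_zero m j : (m < j)%N -> fp m j = 0.
Proof.
elim: j => // j IH; rewrite ltnS leq_eqVlt fp_recr => /orP [/eqP ->|/IH ->].
  by rewrite subnn expr0 subrr mulr0.
by rewrite mul0r.
Qed.

Lemma fp_add n a b : fp n (a + b) = fp n a * fp (n - a) b.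
Proof.
elim: b => [|b IH]; first by rewrite addn0 fp0 mulr1.
by rewrite addnS !fp_recr IH subnDA mulrA.
Qed.

Lemma onemq_neq0 j : (1 <= j <= Nm)%N -> 1 - q ^+ j != 0.
Proof. by move=> h; rewrite subr_eq0 eq_sym hq. Qed.

Lemma qf_neq0 n : (n <= Nm)%N -> qf n != 0.
Proof.
move=> hn; rewrite /qf /fp; apply/prodf_neq0 => i _.
apply: onemq_neq0; apply/andP; split; first by rewrite subn_gt0.
by rewrite (leq_trans (leq_subr _ _) hn).
Qed.

Lemma qf_rec n : qf n.+1 = (1 - q ^+ n.+1) * qf n.
Proof. by rewrite /qf fp_recl. Qed.

Lemma B_n0 n : B n 0 = 1.
Proof. by rewrite /B /qf !fp0 divr1. Qed.

Lemma B_gt n m : (n < m)%N -> B n m = 0.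
Proof. by move=> h; rewrite /B fp_zero // mul0r. Qed.

Lemma pascal1 n m : (n.+1 <= Nm)%N ->
  B n.+1 m.+1 = B n m + q ^+ m.+1 * B n m.+1.
Proof.
move=> hn; case: (leqP m n) => hmn; last first.
  by rewrite !B_gt // ?mulr0 ?addr0 // ltnW.
have hm1 : (m.+1 <= Nm)%N by rewrite (leq_trans _ hn).
rewrite /B fp_recl fp_recr qf_rec.
have e : q ^+ n.+1 = q ^+ m.+1 * q ^+ (n - m).
  by rewrite -exprD; congr (_ ^+ _); lia.
rewrite e.
have h1 : 1 - q ^+ m.+1 != 0 by apply: onemq_neq0; rewrite hm1.
have h2 : qf m != 0 by apply: qf_neq0; rewrite ltnW.
by field; rewrite h1 h2.
Qed.

Lemma pascal2 n m : (n.+1 <= Nm)%N ->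
  B n.+1 m.+1 = B n m.+1 + q ^+ (n - m) * B n m.
Proof.
move=> hn; case: (leqP m n) => hmn; last first.
  by rewrite !B_gt // ?mulr0 ?addr0 // ltnW.
have hm1 : (m.+1 <= Nm)%N by rewrite (leq_trans _ hn).
rewrite /B fp_recl fp_recr qf_rec.
have e : q ^+ n.+1 = q ^+ m.+1 * q ^+ (n - m).
  by rewrite -exprD; congr (_ ^+ _); lia.
rewrite e.
have h1 : 1 - q ^+ m.+1 != 0 by apply: onemq_neq0; rewrite hm1.
have h2 : qf m != 0 by apply: qf_neq0; rewrite ltnW.
by field; rewrite h1 h2.
Qed.


Definition Pp j := \prod_(i < j) (t - q ^+ i).
Definition X n j := t ^+ (n - j) * Pp j.
Definition ce n j := (-1) ^+ j * q ^ (('C(j, 2) + j)%:Z - (n * j)%:Z) * B n j.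
Definition de n j := (-1) ^+ j * q ^ (('C(j, 2))%:Z - (n * j)%:Z) * B n j.

Lemma X_step n j : (j <= n)%N -> X n.+1 j - X n.+1 j.+1 = q ^+ j * X n j.
Proof.
move=> h; rewrite /X /Pp big_ord_recr /= subSS subSn // exprS; ring.
Qed.

Lemma c_d n j : (j <= n)%N -> ce n j * X n j = de n j * (X n.+1 j - X n.+1 j.+1).
Proof.
move=> h; rewrite X_step // /ce /de.
have -> : q ^ (('C(j, 2) + j)%:Z - (n * j)%:Z) =
   q ^ (('C(j, 2))%:Z - (n * j)%:Z) * q ^+ j.
  by rewrite exprnP -expfzDr //; congr (_ ^ _); lia.
ring.
Qed.

Lemma cstep n j : (n.+1 <= Nm)%N -> ce n.+1 j.+1 = de n j.+1 - de n j.
Proof.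
move=> hn; rewrite /ce /de.
case: (leqP j n) => hjn; last first.
  by rewrite !B_gt // ?mulr0 ?subr0 // ltnW.
rewrite pascal2 //.
have hC : 'C(j.+1, 2) = ('C(j, 2) + j)%N by rewrite binS bin1.
rewrite hC.
set E := (('C(j, 2) + j)%:Z - (n * j)%:Z - n%:Z)%R.
have -> : q ^ (('C(j, 2) + j + j.+1)%:Z - (n.+1 * j.+1)%:Z) = q ^ E.
  by congr (_ ^ _); rewrite /E; lia.
have -> : q ^ (('C(j, 2) + j)%:Z - (n * j.+1)%:Z) = q ^ E.
  by congr (_ ^ _); rewrite /E; lia.
have -> : q ^ (('C(j, 2))%:Z - (n * j)%:Z) = q ^ E * q ^+ (n - j).
  by rewrite exprnP -expfzDr //; congr (_ ^ _); rewrite /E; lia.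
rewrite exprS; ring.
Qed.

Lemma ce_n0 n : ce n 0 = 1.
Proof. by rewrite /ce B_n0 /= muln0 expr0z !mul1r. Qed.
Lemma de_n0 n : de n 0 = 1.
Proof. by rewrite /de B_n0 /= muln0 expr0z !mul1r. Qed.

Lemma CV n : (n <= Nm)%N -> \sum_(j < n.+1) ce n j * X n j = 1.
Proof.
elim: n => [|n IH] hn.
  by rewrite big_ord1 ce_n0 /X /Pp big_ord0 subnn expr0 !mul1r.
rewrite -{}IH ?(ltnW hn) //.
rewrite (eq_bigr (fun j : 'I_n.+1 => de n j * (X n.+1 j - X n.+1 j.+1))); last first.
  by move=> j _; rewrite c_d // -ltnS.
rewrite big_ord_recl ce_n0.
rewrite (eq_bigr (fun j : 'I_n.+1 => de n j.+1 * X n.+1 j.+1 - de n j * X n.+1 j.+1)); last first.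
  by move=> j _; rewrite /= cstep // mulrBl.
rewrite sumrB.
rewrite [in RHS](eq_bigr (fun j : 'I_n.+1 => de n j * X n.+1 j - de n j * X n.+1 j.+1)); last first.
  by move=> j _; rewrite mulrBr.
rewrite [in RHS]sumrB addrA; congr (_ - _).
transitivity (\sum_(j < n.+2) de n j * X n.+1 j).
  by rewrite [RHS]big_ord_recl /= de_n0.
by rewrite big_ord_recr /= /de (@B_gt n n.+1) // mulr0 mul0r addr0.
Qed.


Definition G N l j := if (j <= l)%N then B (N - j) (l - j) else 0.
Definition aexp N k l j : int := ('C(j, 2) + N.+1 * j)%:Z - ((k + l) * j)%:Z.
Definition A N k l j := (-1) ^+ j * q ^ (aexp N k l j) * B k j * G N l j.
Definition FF N k l := \sum_(j < k.+1) A N k l j * X k j.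

Lemma G_rec N l j : (N.+1 <= Nm)%N -> (j <= N)%N ->
  G N.+1 l.+1 j = G N l j + q ^+ (l.+1 - j) * G N l.+1 j.
Proof.
move=> hN hj; rewrite /G.
case: (leqP j l) => hjl.
  rewrite (leq_trans hjl (leqnSn l)) !subSn // pascal1 //.
  by rewrite (leq_ltn_trans (leq_subr j N) hN).
have h1 : (j <= l)%N = false by rewrite leqNgt hjl.
case: (ltngtP j l.+1) => hj1.
- by rewrite ltnNge hjl in hj1.
- by rewrite mulr0 ?addr0.
- by rewrite hj1 subnn !B_n0 expr0 mul1r add0r.
Qed.

Lemma A_rec N k l j : (N.+1 <= Nm)%N -> (k <= N)%N ->
  A N.+1 k l.+1 j = A N k l j + q ^+ l.+1 * A N k l.+1 j.
Proof.
move=> hN hk; rewrite /A.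
case: (leqP j k) => hjk; last by rewrite !B_gt // !mulr0 !mul0r ?mulr0 ?addr0.
have hjN : (j <= N)%N by apply: leq_trans hk.
case: (leqP j l.+1) => hjl; last first.
  have h1 : (j <= l)%N = false by rewrite leqNgt ltnW.
  have h2 : (j <= l.+1)%N = false by rewrite leqNgt hjl.
  by rewrite /G h1 h2 !mulr0 ?addr0.
rewrite G_rec //.
have -> : aexp N.+1 k l.+1 j = aexp N k l j by rewrite /aexp; lia.
have e : q ^ aexp N k l j * q ^+ (l.+1 - j) = q ^+ l.+1 * q ^ aexp N k l.+1 j.
  by rewrite !exprnP -!expfzDr //; congr (_ ^ _); rewrite /aexp; lia.
rewrite mulrDr; congr (_ + _).
transitivity ((-1) ^+ j * B k j * G N l.+1 j * (q ^ aexp N k l j * q ^+ (l.+1 - j))).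
  by ring.
rewrite e; ring.
Qed.

Lemma A_rec0 N k j : A N.+1 k 0 j = A N k 0 j.
Proof.
rewrite /A /G; case: j => [|j] /=; last by rewrite !mulr0.
by rewrite /aexp !muln0 !B_n0.
Qed.

Lemma FF_rec N k l : (N.+1 <= Nm)%N -> (k <= N)%N ->
  FF N.+1 k l.+1 = FF N k l + q ^+ l.+1 * FF N k l.+1.
Proof.
move=> hN hk; rewrite /FF mulr_sumr -big_split /=; apply: eq_bigr => j _.
by rewrite A_rec //; ring.
Qed.

Lemma FF_rec0 N k : FF N.+1 k 0 = FF N k 0.
Proof. by rewrite /FF; apply: eq_bigr => j _; rewrite A_rec0. Qed.

Lemma BG k l j : (l <= k)%N -> (k <= Nm)%N -> B k j * G k l j = B k l * B l j.
Proof.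
move=> hlk hk; rewrite /G; case: (leqP j l) => hjl; last first.
  by rewrite (@B_gt l j) // !mulr0.
rewrite /B.
have e1 : fp k l = fp k j * fp (k - j) (l - j) by rewrite -fp_add subnKC.
have e2 : qf l = fp l j * qf (l - j).
  by rewrite /qf -{2}(subnKC hjl) fp_add.
have hql : qf l != 0 by apply: qf_neq0; apply: leq_trans hk.
have hqj : qf j != 0 by apply: qf_neq0; apply: leq_trans hk; apply: leq_trans hlk.
have hqlj : qf (l - j) != 0.
  by apply: qf_neq0; apply: leq_trans hk; apply: leq_trans hlk; apply: leq_subr.
have hfl : fp l j != 0 by move: hql; rewrite e2 mulf_eq0 negb_or => /andP [].
rewrite e1 e2; by field; rewrite hfl hqj hqlj.
Qed.

Lemma BG0 k l j : (k < l)%N -> B k j * G k l j = 0.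
Proof.
move=> hkl; rewrite /G; case: (leqP j k) => hjk; last by rewrite B_gt // mul0r.
rewrite (leq_trans hjk (ltnW hkl)) (@B_gt (k - j) (l - j)) ?mulr0 //; lia.
Qed.

Lemma A_kk k l j : (l <= k)%N -> (k <= Nm)%N -> A k k l j = B k l * ce l j.
Proof.
move=> hlk hk; rewrite /A -mulrA BG // /ce.
have -> : aexp k k l j = ('C(j, 2) + j)%:Z - (l * j)%:Z by rewrite /aexp; lia.
ring.
Qed.

Lemma X_kl k l j : (j <= l)%N -> (l <= k)%N -> X k j = t ^+ (k - l) * X l j.
Proof.
move=> hjl hlk; rewrite /X mulrA -exprD; congr (_ ^+ _ * _); lia.
Qed.

Lemma FF_base k l : (k <= Nm)%N -> FF k k l = t ^+ (k - l) * B k l.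
Proof.
move=> hk; rewrite /FF.
case: (leqP l k) => hlk; last first.
  rewrite (@B_gt k l) // mulr0; apply: big1 => j _.
  by rewrite /A -(mulrA _ (B k j)) BG0 // mulr0 mul0r.
rewrite (eq_bigr (fun j : 'I_k.+1 => B k l * (if (j < l.+1)%N then t ^+ (k - l) * (ce l j * X l j) else 0))); last first.
  move=> j _; rewrite A_kk //; case: (leqP j l) => hj.
    by rewrite ltnS hj (@X_kl k l j) //; ring.
  by rewrite ltnS leqNgt hj /= /ce (@B_gt l j) // !mulr0 mul0r.
transitivity (B k l * \sum_(i < k.+1) (if (i < l.+1)%N then t ^+ (k - l) * (ce l i * X l i) else 0)).
  by rewrite mulr_sumr.
rewrite -big_mkcond /= -mulr_sumr -(big_ord_widen k.+1 (fun j => ce l j * X l j)) //.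
by rewrite CV ?mulr1 ?(leq_trans hlk) // mulrC.
Qed.

Definition S N k l := \sum_(P : N.-tuple bool | count id P == l)
   q ^+ path_area P * t ^+ path_yk k P.

Lemma count_rcons (s : seq bool) b : count id (rcons s b) = (count id s + b)%N.
Proof. by rewrite -cats1 count_cat /= addn0. Qed.

Lemma area_rcons N (P : N.-tuple bool) b :
  path_area (rcons_tuple P b) = (path_area P + (~~ b) * count id P)%N.
Proof.
rewrite /path_area big_mkcond big_ord_recr /= [in RHS]big_mkcond /=.
congr (_ + _)%N.
  apply: eq_bigr => i _.
  rewrite !(tnth_nth false) /= nth_rcons size_tuple ltn_ord.
  by rewrite -cats1 takel_cat // size_tuple ltnW.
rewrite (tnth_nth false) /= nth_rcons size_tuple ltnn eqxx.
rewrite -cats1 takel_cat ?size_tuple // -{1}(size_tuple P) take_size.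
by case: b => /=; rewrite ?mul1n ?mul0n.
Qed.

Lemma yk_rcons k N (P : N.-tuple bool) b : (k <= N)%N ->
  path_yk k (rcons_tuple P b) = path_yk k P.
Proof. by move=> hk; rewrite /path_yk /= -cats1 takel_cat // size_tuple. Qed.

Lemma S_rec N k l : (k <= N)%N ->
  S N.+1 k l = (if l is l'.+1 then S N k l' else 0) + q ^+ l * S N k l.
Proof.
move=> hk; rewrite /S.
rewrite (reindex (fun pb : N.-tuple bool * bool => rcons_tuple pb.1 pb.2)) /=; last first.
  apply: onW_bij; apply: inj_card_bij.
    move=> [P b] [P' b'] /(congr1 val) /= /rcons_inj [/val_inj -> ->] //.
  by rewrite card_prod !card_tuple card_bool expnS mulnC.
rewrite big_mkcond /=.
rewrite -(pair_bigA _ (fun (P : N.-tuple bool) (b : bool) =>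
   if count id (rcons P b) == l then q ^+ path_area (rcons_tuple P b) *
      t ^+ path_yk k (rcons_tuple P b) else 0)) /=.
rewrite (eq_bigr (fun P : N.-tuple bool =>
   (if l is l'.+1 then (if count id P == l' then q ^+ path_area P * t ^+ path_yk k P else 0) else 0)
   + q ^+ l * (if count id P == l then q ^+ path_area P * t ^+ path_yk k P else 0))); last first.
  move=> P _; rewrite big_bool /= !count_rcons !yk_rcons // !area_rcons /=.
  congr (_ + _).
    rewrite addn1 mul0n addn0; case: l => [|l] //.
  rewrite addn0 mul1n; case: eqP => [->|_]; last by rewrite mulr0.
  by rewrite exprD; ring.
rewrite big_split /=; congr (_ + _).
  case: l => [|l]; first by rewrite big1.
  by rewrite -big_mkcond.
by rewrite -mulr_sumr -big_mkcond.
Qed.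

Lemma S_kk N l : S N N l = t ^+ (N - l) * S N 0 l.
Proof.
rewrite /S mulr_sumr; apply: eq_bigr => P /eqP hP.
rewrite /path_yk take0 /= expr0 mulr1 take_oversize ?size_tuple // mulrC.
congr (_ * _); congr (_ ^+ _).
have h : (l + count negb P)%N = N.
  by rewrite -hP -[X in _ = X](size_tuple P) -(count_predC id).
by rewrite -[X in _ = (X - _)%N]h addKn.
Qed.

Lemma S_0 N l : (N <= Nm)%N -> S N 0 l = B N l.
Proof.
elim: N l => [|N IH] l hN.
  rewrite /S big_mkcond (big_pred1 [tuple]) /=; last by move=> P /=; apply/esym/eqP; exact: tuple0.
  rewrite /path_area /path_yk big_ord0 /=.
  case: l => [|l]; first by rewrite B_n0 expr0 mulr1.
  by rewrite B_gt.
rewrite S_rec //; case: l => [|l].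
  by rewrite IH ?(ltnW hN) // !B_n0 expr0 mul1r add0r.
by rewrite !IH ?(ltnW hN) // pascal1.
Qed.

Lemma FF_S N k l : (N <= Nm)%N -> (k <= N)%N -> FF N k l = S N k l.
Proof.
elim: N l => [|N IH] l hN hk.
  move: hk; rewrite leqn0 => /eqP ->.
  by rewrite FF_base // S_kk S_0.
case: (ltngtP k N.+1) => hkN; last first.
- by rewrite hkN FF_base // S_kk S_0.
- by rewrite ltnNge hk in hkN.
rewrite S_rec //; case: l => [|l].
  by rewrite FF_rec0 IH ?(ltnW hN) // expr0 mul1r add0r.
by rewrite FF_rec // !IH ?(ltnW hN).
Qed.

Lemma qpoch0 j : qpoch 0 q j = 1.
Proof. by rewrite /qpoch big1 // => i _; rewrite mul0r subr0. Qed.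

Lemma qpoch_qq j : qpoch q q j = qf j.
Proof.
elim: j => [|j IH]; first by rewrite /qpoch /qf fp0 big_ord0.
by rewrite /qpoch big_ord_recr /= -/(qpoch q q j) IH qf_rec -exprS mulrC.
Qed.

Lemma qpoch_neg m j :
  qpoch (q ^- m) q j = (-1) ^+ j * q ^ (('C(j, 2))%:Z - (m * j)%:Z) * fp m j.
Proof.
elim: j => [|j IH]; first by rewrite /qpoch big_ord0 fp0 /= muln0 expr0z !mulr1.
rewrite /qpoch big_ord_recr /= -/(qpoch (q ^- m) q j) IH fp_recr.
case: (leqP m j) => hmj.
  rewrite (_ : (m - j = 0)%N); last by apply/eqP; rewrite subn_eq0.
  rewrite expr0 subrr !mulr0.
  case: (ltngtP m j) hmj => // [hlt|->] _; first by rewrite (@fp_zero m j) // mulr0 mul0r.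
  rewrite mulVf ?subrr ?mulr0 //; exact: expf_neq0.
set w := q ^ ((j : int) - (m : int)).
have e1 : q ^- m * q ^+ j = w.
  by rewrite exprnN !exprnP -expfzDr // addrC.
have e2 : w * q ^+ (m - j) = 1.
  by rewrite exprnP -expfzDr //; rewrite (_ : _ + _ = 0) ?expr0z //; lia.
have e3 : q ^ (('C(j.+1, 2))%:Z - (m * j.+1)%:Z) =
    q ^ (('C(j, 2))%:Z - (m * j)%:Z) * w.
  rewrite -expfzDr //; congr (_ ^ _); rewrite binS bin1; lia.
rewrite e1 e3 exprS.
transitivity ((-1) ^+ j * q ^ (('C(j, 2))%:Z - (m * j)%:Z) * fp m j * (w * q ^+ (m - j) - w)).
  by rewrite e2.
ring.
Qed.

Lemma qpoch_t k j : t != 0 -> (j <= k)%N -> t ^+ k * qpoch t^-1 q j = X k j.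
Proof.
move=> ht hjk; rewrite /qpoch /X /Pp.
rewrite (eq_bigr (fun i : 'I_j => t^-1 * (t - q ^+ i))); last first.
  by move=> i _; rewrite mulrBr mulVf.
rewrite big_split /= prodr_const card_ord mulrA; congr (_ * _).
rewrite exprVn -{1}(subnK hjk) exprD mulfK //; exact: expf_neq0.
Qed.

Lemma fpN_neq0 j : (j <= Nm)%N -> fp Nm j != 0.
Proof.
move=> hj; have : qf Nm != 0 by apply: qf_neq0.
by rewrite /qf -{2}(subnKC hj) fp_add mulf_eq0 negb_or => /andP [].
Qed.

Lemma Hg l j : (l <= Nm)%N -> (j <= Nm)%N ->
  qbinom q Nm l * fp l j / fp Nm j = G Nm l j.
Proof.
move=> hl hj; rewrite /G /qbinom !qpoch_qq.
case: (leqP j l) => hjl; last by rewrite (@fp_zero l j) // mulr0 mul0r.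
have e0 : qf Nm = fp Nm l * qf (Nm - l) by rewrite /qf -{2}(subnKC hl) fp_add.
have e1 : fp Nm l = fp Nm j * fp (Nm - j) (l - j) by rewrite -fp_add subnKC.
have e2 : qf l = fp l j * qf (l - j).
  by rewrite /qf -{2}(subnKC hjl) fp_add.
have hql : qf l != 0 by apply: qf_neq0.
have hqNl : qf (Nm - l) != 0 by apply: qf_neq0; apply: leq_subr.
have hqlj : qf (l - j) != 0 by apply: qf_neq0; apply: leq_trans hl; apply: leq_subr.
have hfl : fp l j != 0 by move: hql; rewrite e2 mulf_eq0 negb_or => /andP [].
have hfN := fpN_neq0 _ hj.
rewrite /B e0 e1 e2; by field; rewrite hfl hfN hqNl hqlj.
Qed.

Lemma conv k l : t != 0 -> (k <= Nm)%N -> (l <= Nm)%N ->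
  qbinom q Nm l * t ^+ k * phi32 Nm (q ^- k) (q ^- l) t^-1 (q ^- Nm) 0 q q = FF Nm k l.
Proof.
move=> ht hk hl; rewrite /phi32 /FF mulr_sumr.
rewrite (big_ord_widen Nm.+1 (fun j => A Nm k l j * X k j)) // big_mkcond /=.
rewrite [RHS]big_mkcond; apply: eq_bigr => [[j hj]] _ /=.
rewrite ltnS; case: (leqP j k) => hjk; last first.
  by rewrite qpoch_neg (@fp_zero k j) // !(mulr0, mul0r).
have hjN : (j <= Nm)%N by apply: leq_trans hk.
rewrite !qpoch_neg qpoch_qq qpoch0 mulr1.
set s := (-1) ^+ j : F.
set Ek := q ^ (('C(j, 2))%:Z - (k * j)%:Z).
set El := q ^ (('C(j, 2))%:Z - (l * j)%:Z).
set EN := q ^ (('C(j, 2))%:Z - (Nm * j)%:Z).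
have hs : s != 0 by rewrite /s expf_neq0 // oppr_eq0 oner_eq0.
have hEN : EN != 0 by apply: expfz_neq0.
have hqj : qf j != 0 by apply: qf_neq0.
have hfN := fpN_neq0 _ hjN.
have Hexp : Ek * El * q ^+ j = q ^ (aexp Nm k l j) * EN.
  by rewrite /Ek /El /EN exprnP -!expfzDr //; congr (_ ^ _); rewrite /aexp; lia.
have Ha : Ek * El * q ^+ j / EN = q ^ (aexp Nm k l j) by rewrite Hexp mulfK.
transitivity (s * (Ek * El * q ^+ j / EN) * (fp k j / qf j) *
   (qbinom q Nm l * fp l j / fp Nm j) * (t ^+ k * qpoch t^-1 q j)).
  by field; rewrite hs hEN hqj hfN.
rewrite Ha Hg // qpoch_t // /A /B; ring.
Qed.

End Alg.

Theorem mainTheorem11 (R : realType) (N k l : nat) (q t : R[i])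
  (hk : (k <= N)%N) (hl : (l <= N)%N)
  (hq0 : q != 0) (hq : forall j : nat, (1 <= j <= N)%N -> q ^+ j != 1)
  (ht : t != 0) :
  qbinom q N l * t ^+ k *
    phi32 N (q ^- k) (q ^- l) t^-1 (q ^- N) 0 q q
  = \sum_(P : N.-tuple bool | path_end_ok l P)
      q ^+ path_area P * t ^+ path_yk k P.
Proof.
by rewrite (@conv _ q t N hq0 hq) // (@FF_S _ q t N hq0 hq).
Qed.
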